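(* Let $a=(a_2,\dots,a_k)$ be a tuple of nonnegative integers, not all zero, and let $2^p$ be the largest power of $2$ dividing all $a_i$. (1) If $\binom{|a|}{a}\equiv 1\pmod 2$, then there is a unique index $l$ such that $\binom{|a|-1}{\hat a_l}\equiv 1\pmod 2$; it is the unique index with $2^{p+1}\nmid a_l$. (2) If $\binom{|a|}{a}\equiv 0\pmod 2$ and $\binom{|a|-1}{\hat a_j}\equiv 1\pmod 2$ for some $j$, then there is a unique index $l\neq j$ with $\binom{|a|-1}{\hat a_l}\equiv 1\pmod 2$; it is the unique index other than $j$ with $2^{p+1}\nmid a_l$.
   Context: $|a|=a_2+\dots+a_k$ and $\binom{|a|}{a}=\frac{|a|!}{a_2!\cdots a_k!}$ is the multinomial coefficient. $\hat a_j=(a_2,\dots,a_j-1,\dots,a_k)$; the multinomial coefficient of a tuple with a negative entry is defined to be $0$. *)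

(* Defs.v *)
From mathcomp Require Import all_boot.
Set Implicit Arguments. Unset Strict Implicit. Unset Printing Implicit Defensive.

(* A tuple a = (a_2, ..., a_k) is represented as a : 'I_n -> nat (n = k-1). *)

Definition absn (n : nat) (a : 'I_n -> nat) : nat := \sum_(i < n) a i.

Definition multinom (n : nat) (a : 'I_n -> nat) : nat :=
  (absn a)`! %/ \prod_(i < n) (a i)`!.

Definition hat (n : nat) (a : 'I_n -> nat) (j : 'I_n) : 'I_n -> nat :=
  fun i => if i == j then (a j).-1 else a i.

(* multinomial coefficient of hat a_j; 0 when a_j - 1 would be negative *)
Definition multinom_hat (n : nat) (a : 'I_n -> nat) (j : 'I_n) : nat :=
  if a j == 0 then 0 else multinom (hat a j).

(* Main.v *)
Require Import Defs.
From mathcomp Require Import all_boot.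
From mathcomp Require Import zify.
Set Implicit Arguments. Unset Strict Implicit. Unset Printing Implicit Defensive.

Definition Ms (n : nat) (x : 'I_n -> nat) (k : nat) : nat := \sum_(i < n) x i %% 2 ^ k.

Lemma fact_dvd n (x : 'I_n -> nat) :
  \prod_(i < n) (x i)`! %| (\sum_(i < n) x i)`!.
Proof.
elim: n x => [|n IH] x; first by rewrite !big_ord0.
rewrite !big_ord_recr /=.
set S := \sum_(i < n) _; set m := x ord_max.
have := bin_fact (leq_addl S m); rewrite addnK => <-.
rewrite mulnCA [X in _ %| X]mulnC dvdn_mul //; apply: dvdn_mull; exact: IH.
Qed.

Lemma multinomE n (x : 'I_n -> nat) :
  (absn x)`! = multinom x * \prod_(i < n) (x i)`!.
Proof. by rewrite /multinom divnK // fact_dvd. Qed.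

Lemma logn_fact_N m N : m <= N -> logn 2 m`! = \sum_(1 <= k < N.+1) m %/ 2 ^ k.
Proof.
move=> mN; rewrite logn_fact // [RHS](@big_cat_nat _ _ _ m.+1) //=.
rewrite [X in _ + X]big1_seq ?addn0 // => k /andP[_].
rewrite mem_index_iota => /andP[mk _]; apply: divn_small.
exact: leq_trans mk (ltnW (ltn_expl _ _)).
Qed.

Lemma logn_prod n (F : 'I_n -> nat) : (forall i, 0 < F i) ->
  logn 2 (\prod_(i < n) F i) = \sum_(i < n) logn 2 (F i).
Proof.
move=> Fpos.
suff [] : 0 < \prod_(i < n) F i /\ logn 2 (\prod_(i < n) F i) = \sum_(i < n) logn 2 (F i) by [].
apply: (big_rec2 (fun y1 y2 => 0 < y1 /\ logn 2 y1 = y2)) => [|i y1 y2 _ [y1p <-]].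
  by rewrite logn1.
by rewrite muln_gt0 Fpos y1p lognM.
Qed.

Lemma term_le n (x : 'I_n -> nat) i : x i <= \sum_(i < n) x i.
Proof. by rewrite (bigD1 i) //= leq_addr. Qed.

Lemma divsum n (x : 'I_n -> nat) d : 0 < d ->
  (\sum_(i < n) x i) %/ d = \sum_(i < n) (x i %/ d) + (\sum_(i < n) x i %% d) %/ d.
Proof.
move=> d0.
rewrite (eq_bigr (fun i => x i %/ d * d + x i %% d)) => [|i _]; last by rewrite -divn_eq.
by rewrite big_split /= -big_distrl /= divnMDl.
Qed.

Lemma logn_multinom n (x : 'I_n -> nat) :
  logn 2 (multinom x) = \sum_(1 <= k < (absn x).+1) Ms x k %/ 2 ^ k.
Proof.
have Pp : 0 < \prod_(i < n) (x i)`! by rewrite prodn_gt0 // => i; exact: fact_gt0.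
have Mp : 0 < multinom x.
  by move: (fact_gt0 (absn x)); rewrite multinomE muln_gt0 => /andP[].
have := congr1 (logn 2) (multinomE x).
rewrite lognM // logn_prod; last by move=> i; apply: fact_gt0.
rewrite (logn_fact_N (leqnn _)).
rewrite (eq_bigr (fun i => \sum_(1 <= k < (absn x).+1) x i %/ 2 ^ k)); last first.
  by move=> i _; rewrite (logn_fact_N (term_le x i)).
rewrite (eq_bigr (fun k => \sum_(i < n) (x i %/ 2 ^ k) + Ms x k %/ 2 ^ k)); last first.
  by move=> k _; rewrite /absn divsum ?expn_gt0.
rewrite big_split /= exchange_big /= addnC => /addIn <-. by [].
Qed.

Lemma divn_eq0' m d : 0 < d -> (m %/ d == 0) = (m < d).
Proof. by move=> d0; rewrite -leqn0 leqNgt divn_gt0 // -ltnNge. Qed.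

Lemma key n (x : 'I_n -> nat) : odd (multinom x) <-> forall k, Ms x k < 2 ^ k.
Proof.
have Pp : 0 < \prod_(i < n) (x i)`! by rewrite prodn_gt0 // => i; exact: fact_gt0.
have Mp : 0 < multinom x.
  by move: (fact_gt0 (absn x)); rewrite multinomE muln_gt0 => /andP[].
have oddE : odd (multinom x) = (logn 2 (multinom x) == 0).
  by rewrite -leqn0 leqNgt logn_gt0 mem_primes /= Mp dvdn2 negbK.
rewrite oddE logn_multinom sum_nat_seq_eq0.
split.
- move=> /allP H k.
  case: k => [|k]; first by rewrite /Ms big1 // => i _; rewrite modn1.
  case: (ltnP k (absn x)) => kN.
    have := H k.+1; rewrite mem_index_iota /= ltnS kN => /(_ isT).
    by rewrite divn_eq0' ?expn_gt0.
  apply: leq_ltn_trans (ltn_expl _ _) => //.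
  apply: leq_trans (leq_trans kN (leqnSn _)).
  by apply: leq_sum => i _; apply: leq_mod.
- move=> H; apply/allP => k _; apply/implyP => _.
  by rewrite divn_eq0' ?expn_gt0.
Qed.

Lemma hat_ne n (a : 'I_n -> nat) j i : i != j -> hat a j i = a i.
Proof. by move=> H; rewrite /hat (negbTE H). Qed.

Lemma hat_eq n (a : 'I_n -> nat) j : hat a j j = (a j).-1.
Proof. by rewrite /hat eqxx. Qed.

Lemma hatM n (a : 'I_n -> nat) j k :
  Ms (hat a j) k + a j %% 2 ^ k = Ms a k + (a j).-1 %% 2 ^ k.
Proof.
rewrite /Ms (bigD1 j) //= [in RHS](bigD1 j) //= hat_eq.
have -> : \sum_(i < n | i != j) hat a j i %% 2 ^ k = \sum_(i < n | i != j) a i %% 2 ^ k.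
  by apply: eq_bigr => i ij; rewrite hat_ne.
move: (\sum_(i < n | i != j) a i %% 2 ^ k) (a j %% _) ((a j).-1 %% _) => u v w.
lia.
Qed.

Lemma pairM n (x : 'I_n -> nat) d i i' : i != i' ->
  x i %% d + x i' %% d <= \sum_(m < n) x m %% d.
Proof.
move=> ne; rewrite (bigD1 i) //= leq_add2l (bigD1 i') /= ?leq_addr //.
by rewrite eq_sym.
Qed.

Lemma mod_half b p : 2 ^ p %| b -> ~~ (2 ^ p.+1 %| b) -> b %% 2 ^ p.+1 = 2 ^ p.
Proof.
case/dvdnP => t -> H.
rewrite expnS -muln_modl modn2.
move: H; rewrite expnS dvdn_pmul2r ?expn_gt0 // dvdn2 negbK => ->.
by rewrite mul1n.
Qed.

Lemma mod_pred_dvd m b : 0 < m -> m %| b -> 0 < b -> b.-1 %% m = m.-1.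
Proof.
move=> m0 /dvdnP [t ->]; case: t => // t _.
have -> : (t.+1 * m).-1 = t * m + m.-1.
  rewrite mulSn; case: m m0 => // m' _ /=; lia.
by rewrite modnMDl modn_small // ltn_predL.
Qed.

Lemma mod_pred_ndvd m b : ~~ (m %| b) -> b %% m = (b.-1 %% m).+1.
Proof.
case: b => [|b'] H; first by rewrite dvdn0 in H.
by rewrite modnS (negbTE H).
Qed.

Lemma dvd_mod_eq d m D : d %| D -> (d %| m %% D) = (d %| m).
Proof. by move=> dD; rewrite {2}(divn_eq m D) dvdn_addr // dvdn_mull. Qed.

Lemma Ms_low n (a : 'I_n -> nat) p k : k <= p -> (forall i, 2 ^ p %| a i) -> Ms a k = 0.
Proof.
move=> kp H; rewrite /Ms big1 // => i _; apply/eqP.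
exact: dvdn_trans (dvdn_exp2l 2 kp) (H i).
Qed.

Theorem mainTheorem6 (n : nat) (a : 'I_n -> nat) (p : nat) :
  (exists i, a i != 0) ->
  (* 2^p is the largest power of 2 dividing all a_i *)
  (forall i, 2 ^ p %| a i) -> ~ (forall i, 2 ^ p.+1 %| a i) ->
  (odd (multinom a) ->
     exists l : 'I_n,
       (forall i, odd (multinom_hat a i) <-> i = l) /\
       (forall i, ~~ (2 ^ p.+1 %| a i) <-> i = l))
  /\
  (forall j : 'I_n, ~~ odd (multinom a) -> odd (multinom_hat a j) ->
     exists l : 'I_n, l != j /\
       (forall i, i != j -> (odd (multinom_hat a i) <-> i = l)) /\
       (forall i, i != j -> (~~ (2 ^ p.+1 %| a i) <-> i = l))).
Proof.
move=> [i0 nz0] Hdiv Hnd.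
have [i1 Hi1] : exists i1, ~~ (2 ^ p.+1 %| a i1).
  case/boolP: [forall i, 2 ^ p.+1 %| a i] => [/forallP H|/forallPn [i Hi]].
    by case: Hnd.
  by exists i.
have half : forall i, ~~ (2 ^ p.+1 %| a i) -> a i %% 2 ^ p.+1 = 2 ^ p.
  by move=> i; apply: mod_half.
have E2 : 2 ^ p.+1 = 2 ^ p + 2 ^ p by rewrite expnS mul2n addnn.
have P0 : 0 < 2 ^ p by rewrite expn_gt0.
have pos : forall i, ~~ (2 ^ p.+1 %| a i) -> 0 < a i.
  by move=> i; case: (a i) => //; rewrite dvdn0.
have predfull : forall i, 2 ^ p.+1 %| a i -> 0 < a i ->
    (a i).-1 %% 2 ^ p.+1 = (2 ^ p.+1).-1.
  by move=> i; apply: mod_pred_dvd; rewrite expn_gt0.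
have bad : forall (x : 'I_n -> nat) i i', i != i' ->
    x i %% 2 ^ p.+1 = (2 ^ p.+1).-1 -> x i' %% 2 ^ p.+1 = 2 ^ p ->
    ~ (Ms x p.+1 < 2 ^ p.+1).
  move=> x i i' ne h1 h2 H; have := leq_ltn_trans (pairM x (2 ^ p.+1) ne) H.
  rewrite h1 h2 E2; move: (2 ^ p) P0 => P; lia.
have two : forall (x : 'I_n -> nat) i i', i != i' ->
    x i %% 2 ^ p.+1 = 2 ^ p -> x i' %% 2 ^ p.+1 = 2 ^ p ->
    ~ (Ms x p.+1 < 2 ^ p.+1).
  move=> x i i' ne h1 h2 H; have := leq_ltn_trans (pairM x (2 ^ p.+1) ne) H.
  rewrite h1 h2 E2; move: (2 ^ p) P0 => P; lia.
have lowhat : forall l k, k <= p -> 0 < a l -> Ms (hat a l) k = (2 ^ k).-1.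
  move=> l k kp al; have := hatM a l k.
  rewrite (Ms_low kp Hdiv) mod_pred_dvd ?expn_gt0 //; last first.
    exact: dvdn_trans (dvdn_exp2l 2 kp) (Hdiv l).
  have -> : a l %% 2 ^ k = 0.
    by apply/eqP; exact: dvdn_trans (dvdn_exp2l 2 kp) (Hdiv l).
  by rewrite addn0 add0n.
have highhat : forall l k, p < k -> ~~ (2 ^ p.+1 %| a l) ->
    Ms a k = (Ms (hat a l) k).+1.
  move=> l k pk H.
  have nd : ~~ (2 ^ k %| a l).
    by apply: contra H => H; apply: dvdn_trans (dvdn_exp2l 2 pk) H.
  have := hatM a l k; rewrite (mod_pred_ndvd nd).
  move: (Ms a k) (Ms (hat a l) k) ((a l).-1 %% _) => u v w; lia.
have key_hat : forall i, odd (multinom_hat a i) <->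
    0 < a i /\ forall k, Ms (hat a i) k < 2 ^ k.
  move=> i; rewrite /multinom_hat; case: eqP => [->|/eqP H].
    by split => //; case.
  by rewrite key lt0n H; split => // [[]].
split.
- move=> /key Ca; exists i1.
  have uniq : forall i, ~~ (2 ^ p.+1 %| a i) <-> i = i1.
    move=> i; split => [Hi|->//]; apply/eqP/negPn/negP => ne.
    exact: (two a i i1 ne (half _ Hi) (half _ Hi1) (Ca _)).
  split => // i; rewrite key_hat; split.
  + move=> [ai Ch]; apply/eqP/negPn/negP => ne.
    have di : 2 ^ p.+1 %| a i.
      by apply/negPn/negP => /uniq /eqP; rewrite (negbTE ne).
    apply: (bad (hat a i) i i1 ne _ _ (Ch _)).
      by rewrite hat_eq predfull.
    by rewrite hat_ne ?half // eq_sym.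
  + move=> ->; split; first exact: pos.
    move=> k; case: (leqP k p) => kp.
      by rewrite lowhat ?pos // ltn_predL expn_gt0.
    have := Ca k; rewrite (highhat i1 k kp Hi1); exact: ltnW.
- move=> j nodd /key_hat [aj Ch].
  have Aj : ~~ (2 ^ p.+1 %| a j).
    apply/negP => dj.
    have ne : j != i1 by apply: contraNneq Hi1 => <-.
    apply: (bad (hat a j) j i1 ne _ _ (Ch _)).
      by rewrite hat_eq predfull.
    by rewrite hat_ne ?half // eq_sym.
  have HMa : forall k, p < k -> Ms a k = (Ms (hat a j) k).+1.
    by move=> k pk; apply: highhat.
  have [l /andP[lj Hl]] : exists l, (l != j) && ~~ (2 ^ p.+1 %| a l).
    case/boolP: [exists l, (l != j) && ~~ (2 ^ p.+1 %| a l)] => [/existsP //|/existsPn H].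
    exfalso; move/negP: nodd; apply; apply/key => k.
    case: (leqP k p) => kp; first by rewrite (Ms_low kp Hdiv) expn_gt0.
    have Hd : forall i, i != j -> 2 ^ p.+1 %| a i.
      by move=> i ij; move: (H i); rewrite ij /= negbK.
    have ndiv : ~~ (2 ^ p.+1 %| Ms a k).
      rewrite /Ms (bigD1 j) //= dvdn_addl.
        by rewrite dvd_mod_eq // dvdn_exp2l.
      by apply: dvdn_sum => i ij; rewrite dvd_mod_eq ?dvdn_exp2l // Hd.
    have := Ch k; rewrite -ltnS -HMa // leq_eqVlt ltnS => /orP[/eqP [E]|//].
    by rewrite E dvdn_exp2l in ndiv.
  exists l; split => //.
  have uniq : forall i, i != j -> (~~ (2 ^ p.+1 %| a i) <-> i = l).
    move=> i ij; split => [Hi|->//]; apply/eqP/negPn/negP => ne.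
    apply: (two (hat a j) i l ne _ _ (Ch _)); rewrite hat_ne ?half //.
  split; last exact: uniq.
  move=> i ij; rewrite key_hat; split.
  + move=> [ai Chi]; apply/eqP/negPn/negP => ne.
    have di : 2 ^ p.+1 %| a i.
      by apply/negPn/negP => /(uniq i ij) /eqP; rewrite (negbTE ne).
    apply: (bad (hat a i) i j ij _ _ (Chi _)).
      by rewrite hat_eq predfull.
    by rewrite hat_ne ?half // eq_sym.
  + move=> ->; split; first exact: pos.
    move=> k; case: (leqP k p) => kp.
      by rewrite lowhat ?pos // ltn_predL expn_gt0.
    have := HMa k kp; rewrite (highhat l k kp Hl) => [[->]]; exact: Ch.
Qed.
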